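(* The class of $(\circ,\wedge,\mathsf{A})$-algebras that are completely representable by partial functions is not axiomatisable by any existential-universal-existential first-order theory.
   Context: A $(\circ,\wedge,\mathsf{A})$-algebra is a set with two binary operations $\circ,\wedge$ and one unary operation $\mathsf{A}$. An algebra of partial functions of this signature is a set of partial functions, with base $X$ the union of all their domains and ranges, closed under: composition $f\circ g=\{(x,z)\mid \exists y\,(x,y)\in f,(y,z)\in g\}$; intersection; antidomain $\mathsf{A}(f)=\{(x,x)\mid x\in X, x\notin\mathrm{dom}(f)\}$. A representation by partial functions is an isomorphism onto such an algebra. The order is $a\le b\iff a\wedge b=a$. A representation $\theta$ is complete if for every nonempty $S$ with $\bigwedge S$ existing, $\theta(\bigwedge S)=\bigcap\theta[S]$ (equivalently, for every $S$ with $\bigvee S$ existing, $\theta(\bigvee S)=\bigcup\theta[S]$). An algebra is completely representable if it has a complete representation. An existential-universal-existential theory is a set of prenex sentences whose quantifier prefix consists of a block of existentials, then universals, then existentials. *)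

(* Defs.v *)
From Stdlib Require Import List.
Import ListNotations.

Record algebra := Algebra {
  carrier :> Type;
  comp : carrier -> carrier -> carrier;
  meet : carrier -> carrier -> carrier;
  antidom : carrier -> carrier
}.

Inductive term : Type :=
| TVar : nat -> term
| TComp : term -> term -> term
| TMeet : term -> term -> term
| TAnt : term -> term.

Inductive formula : Type :=
| FEq : term -> term -> formula
| FNot : formula -> formula
| FAnd : formula -> formula -> formula
| FOr : formula -> formula -> formula
| FEx : nat -> formula -> formula
| FAll : nat -> formula -> formula.

Fixpoint eval (M : algebra) (v : nat -> M) (t : term) : M :=
  match t with
  | TVar n => v n
  | TComp s u => comp M (eval M v s) (eval M v u)
  | TMeet s u => meet M (eval M v s) (eval M v u)
  | TAnt s => antidom M (eval M v s)
  end.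

Definition upd {X : Type} (v : nat -> X) (n : nat) (x : X) : nat -> X :=
  fun k => if Nat.eqb k n then x else v k.

Fixpoint sat (M : algebra) (v : nat -> M) (phi : formula) : Prop :=
  match phi with
  | FEq s u => eval M v s = eval M v u
  | FNot p => ~ sat M v p
  | FAnd p q => sat M v p /\ sat M v q
  | FOr p q => sat M v p \/ sat M v q
  | FEx n p => exists x : M, sat M (upd v n x) p
  | FAll n p => forall x : M, sat M (upd v n x) p
  end.

Definition holds (M : algebra) (phi : formula) : Prop :=
  forall v : nat -> M, sat M v phi.

Fixpoint term_vars_in (P : nat -> Prop) (t : term) : Prop :=
  match t with
  | TVar n => P n
  | TComp s u | TMeet s u => term_vars_in P s /\ term_vars_in P u
  | TAnt s => term_vars_in P s
  end.

Fixpoint closed_in (P : nat -> Prop) (phi : formula) : Prop :=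
  match phi with
  | FEq s u => term_vars_in P s /\ term_vars_in P u
  | FNot p => closed_in P p
  | FAnd p q | FOr p q => closed_in P p /\ closed_in P q
  | FEx n p | FAll n p => closed_in (fun k => k = n \/ P k) p
  end.

Definition sentence (phi : formula) : Prop := closed_in (fun _ => False) phi.

Fixpoint quantifier_free (phi : formula) : Prop :=
  match phi with
  | FEq _ _ => True
  | FNot p => quantifier_free p
  | FAnd p q | FOr p q => quantifier_free p /\ quantifier_free q
  | FEx _ _ | FAll _ _ => False
  end.

Fixpoint exs (l : list nat) (phi : formula) : formula :=
  match l with [] => phi | n :: l' => FEx n (exs l' phi) end.
Fixpoint alls (l : list nat) (phi : formula) : formula :=
  match l with [] => phi | n :: l' => FAll n (alls l' phi) end.

Definition EAE_sentence (phi : formula) : Prop :=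
  sentence phi /\
  exists (l1 l2 l3 : list nat) (psi : formula),
    quantifier_free psi /\ phi = exs l1 (alls l2 (exs l3 psi)).

Definition le (M : algebra) (a b : M) : Prop := meet M a b = a.

Definition is_glb (M : algebra) (S : M -> Prop) (m : M) : Prop :=
  (forall s, S s -> le M m s) /\
  (forall l, (forall s, S s -> le M l s) -> le M l m).

Definition partial_function_rep (M : algebra) (X : Type)
    (theta : M -> X -> X -> Prop) : Prop :=
  (forall a x y z, theta a x y -> theta a x z -> y = z) /\
  (forall x : X, exists a y, theta a x y \/ theta a y x) /\
  (forall a b, (forall x y, theta a x y <-> theta b x y) -> a = b) /\
  (* composition (diagrammatic order) *)
  (forall a b x z, theta (comp M a b) x z <->
                   exists y, theta a x y /\ theta b y z) /\
  (forall a b x y, theta (meet M a b) x y <-> theta a x y /\ theta b x y) /\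
  (forall a x y, theta (antidom M a) x y <->
                 x = y /\ ~ (exists z, theta a x z)).

Definition complete_rep (M : algebra) (X : Type)
    (theta : M -> X -> X -> Prop) : Prop :=
  partial_function_rep M X theta /\
  forall (S : M -> Prop) (m : M),
    (exists s, S s) -> is_glb M S m ->
    forall x y, theta m x y <-> (forall s, S s -> theta s x y).

Definition completely_representable (M : algebra) : Prop :=
  exists (X : Type) (theta : M -> X -> X -> Prop), complete_rep M X theta.

(* Main.v *)
Require Import Defs.
From Stdlib Require Import Bool List Arith Lia Classical FunctionalExtensionality PropExtensionality ProofIrrelevance IndefiniteDescription ClassicalDescription.
Import ListNotations.

Record SetAlg := { pts : Type; good : (pts -> bool) -> Prop;
  good_and : forall f g, good f -> good g -> good (fun p => f p && g p);
  good_neg : forall f, good f -> good (fun p => negb (f p)) }.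

Definition car (S : SetAlg) := {f : pts S -> bool | good S f}.
Definition cmeet (S : SetAlg) (a b : car S) : car S :=
  exist _ _ (good_and S _ _ (proj2_sig a) (proj2_sig b)).
Definition cneg (S : SetAlg) (a : car S) : car S :=
  exist _ _ (good_neg S _ (proj2_sig a)).
Definition mkAlg (S : SetAlg) : algebra :=
  Algebra (car S) (cmeet S) (cmeet S) (cneg S).

Lemma eq_car S (a b : car S) : proj1_sig a = proj1_sig b -> a = b.
Proof. destruct a, b; simpl; intros ->. f_equal. apply proof_irrelevance. Qed.

Fixpoint F (t : term) (e : nat -> bool) : bool :=
  match t with
  | TVar n => e n
  | TComp s u => F s e && F u e
  | TMeet s u => F s e && F u e
  | TAnt s => negb (F s e)
  end.

Lemma eval_val S (v : nat -> car S) t :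
  proj1_sig (eval (mkAlg S) v t) = fun p => F t (fun i => proj1_sig (v i) p).
Proof.
  induction t; simpl; try reflexivity.
  - rewrite IHt1, IHt2; reflexivity.
  - rewrite IHt1, IHt2; reflexivity.
  - rewrite IHt; reflexivity.
Qed.

Lemma F_ext t e e' : (forall i, e i = e' i) -> F t e = F t e'.
Proof. intro H. induction t; simpl; congruence. Qed.

Definition realized S (v : nat -> car S) (e : nat -> bool) : Prop :=
  exists p, forall i, proj1_sig (v i) p = e i.

Lemma eq_eval_iff S (v : nat -> car S) t s :
  eval (mkAlg S) v t = eval (mkAlg S) v s <->
  (forall e, realized S v e -> F t e = F s e).
Proof.
  split.
  - intros H e [p Hp]. apply (f_equal (@proj1_sig _ _)) in H.
    rewrite !eval_val in H. apply (f_equal (fun f => f p)) in H.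
    rewrite (F_ext t _ e Hp), (F_ext s _ e Hp) in H. exact H.
  - intros H. apply eq_car. rewrite !eval_val. apply functional_extensionality.
    intro p. apply H. exists p. reflexivity.
Qed.

Lemma TE S1 S2 (v : nat -> car S1) (w : nat -> car S2) :
  (forall e, realized S1 v e <-> realized S2 w e) ->
  forall t s, eval (mkAlg S1) v t = eval (mkAlg S1) v s <->
              eval (mkAlg S2) w t = eval (mkAlg S2) w s.
Proof.
  intros H t s. rewrite !eq_eval_iff. split; intros H' e He; apply H'; apply H; auto.
Qed.

Lemma qf_transfer (M1 M2 : algebra) (v : nat -> M1) (w : nat -> M2) :
  (forall t s, eval M1 v t = eval M1 v s <-> eval M2 w t = eval M2 w s) ->
  forall psi, quantifier_free psi -> (sat M1 v psi <-> sat M2 w psi).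
Proof.
  intros H psi. induction psi; simpl; intros Hq; try contradiction.
  - apply H.
  - rewrite IHpsi; tauto.
  - destruct Hq. rewrite IHpsi1, IHpsi2 by auto; tauto.
  - destruct Hq. rewrite IHpsi1, IHpsi2 by auto; tauto.
Qed.

Lemma eval_agree (M : algebra) (P : nat -> Prop) t (v v' : nat -> M) :
  term_vars_in P t -> (forall k, P k -> v k = v' k) -> eval M v t = eval M v' t.
Proof.
  intros Ht Hv. induction t; simpl in *; try (destruct Ht); try f_equal; auto.
Qed.

Lemma sat_agree (M : algebra) phi : forall (P : nat -> Prop) (v v' : nat -> M),
  closed_in P phi -> (forall k, P k -> v k = v' k) -> (sat M v phi <-> sat M v' phi).
Proof.
  induction phi; simpl; intros P v v' Hc Hv.
  - destruct Hc. rewrite (eval_agree M P t v v'), (eval_agree M P t0 v v') by auto. tauto.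
  - rewrite (IHphi P v v'); tauto.
  - destruct Hc. rewrite (IHphi1 P v v'), (IHphi2 P v v') by auto. tauto.
  - destruct Hc. rewrite (IHphi1 P v v'), (IHphi2 P v v') by auto. tauto.
  - assert (Hx : forall x, forall k, k = n \/ P k -> upd v n x k = upd v' n x k).
    { intros x k [->|Hk]; unfold upd; [rewrite Nat.eqb_refl; auto | destruct (Nat.eqb k n); auto]. }
    split; intros [x H]; exists x; [rewrite <- (IHphi _ (upd v n x) (upd v' n x) Hc (Hx x)) | rewrite (IHphi _ (upd v n x) (upd v' n x) Hc (Hx x))]; auto.
  - assert (Hx : forall x, forall k, k = n \/ P k -> upd v n x k = upd v' n x k).
    { intros x k [->|Hk]; unfold upd; [rewrite Nat.eqb_refl; auto | destruct (Nat.eqb k n); auto]. }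
    split; intros H x; specialize (H x); [rewrite <- (IHphi _ (upd v n x) (upd v' n x) Hc (Hx x)) | rewrite (IHphi _ (upd v n x) (upd v' n x) Hc (Hx x))]; auto.
Qed.

Lemma game (M1 M2 : algebra) (RX RA RE : (nat -> M1) -> (nat -> M2) -> Prop)
 (hX : forall v w n x, RX v w -> exists x', RX (upd v n x) (upd w n x'))
 (hXA : forall v w, RX v w -> RA v w)
 (hA : forall v w n y', RA v w -> exists y, RA (upd v n y) (upd w n y'))
 (hAE : forall v w, RA v w -> RE v w)
 (hE : forall v w n z, RE v w -> exists z', RE (upd v n z) (upd w n z'))
 (hqf : forall v w psi, RE v w -> quantifier_free psi -> sat M1 v psi -> sat M2 w psi)
 (init : exists v w, RX v w) :
 forall phi, EAE_sentence phi -> holds M1 phi -> holds M2 phi.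
Proof.
  intros phi [Hs (l1 & l2 & l3 & psi & Hq & ->)] H1 w.
  destruct init as (v0 & w0 & H0).
  apply (sat_agree M2 _ (fun _ => False) w0 w Hs (fun k (f : False) => match f with end)).
  specialize (H1 v0). clear w Hs.
  revert v0 w0 H0 H1. induction l1 as [|n l1 IH]; simpl; intros v w H0 H1.
  2:{ destruct H1 as [x Hx]. destruct (hX v w n x H0) as [x' Hx']. exists x'. exact (IH _ _ Hx' Hx). }
  apply hXA in H0.
  revert v w H0 H1. induction l2 as [|n l2 IH]; simpl; intros v w H0 H1.
  2:{ intro y'. destruct (hA v w n y' H0) as [y Hy]. exact (IH _ _ Hy (H1 y)). }
  apply hAE in H0.
  revert v w H0 H1. induction l3 as [|n l3 IH]; simpl; intros v w H0 H1.
  - exact (hqf v w psi H0 Hq H1).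
  - destruct H1 as [x Hx]. destruct (hE v w n x H0) as [x' Hx']. exists x'. exact (IH _ _ Hx' Hx).
Qed.

Inductive ext := Fin (k : nat) | Inf.
Definition eadd (a b : ext) := match a, b with Fin x, Fin y => Fin (x + y) | _, _ => Inf end.
Definition ele (a b : ext) := match a, b with Fin x, Fin y => x <= y | _, Inf => True | Inf, Fin _ => False end.
Definition esub (a b : ext) := match a, b with Fin x, Fin y => Fin (x - y) | Inf, _ => Inf | Fin _, Inf => Fin 0 end.

Definition hasSize (S : nat -> Prop) (s : ext) : Prop :=
  match s with
  | Fin k => exists l, NoDup l /\ length l = k /\ forall x, S x <-> In x l
  | Inf => forall n, exists m, n <= m /\ S m
  end.

Lemma size_ext S T s : (forall x, S x <-> T x) -> hasSize S s -> hasSize T s.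
Proof.
  intros H. destruct s; simpl.
  - intros (l & H1 & H2 & H3). exists l. repeat split; auto; intros; [apply H3, H | apply H, H3]; auto.
  - intros H1 n. destruct (H1 n) as (m & ? & ?). exists m. split; auto. apply H; auto.
Qed.

Fixpoint lmax (l : list nat) := match l with [] => 0 | x :: l => Nat.max x (lmax l) end.
Lemma lmax_ge l x : In x l -> x <= lmax l.
Proof. induction l; simpl; intros []; subst; auto; try lia. specialize (IHl H); lia. Qed.

Lemma size_total S : exists s, hasSize S s.
Proof.
  destruct (classic (exists B, forall m, B <= m -> ~ S m)) as [[B HB]|H].
  - assert (forall B', exists l, NoDup l /\ forall x, (S x /\ x < B') <-> In x l) as HL.
    { induction B' as [|B' IH].
      - exists []. split. constructor. intros; simpl; split; [intros []; lia | intros []].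
      - destruct IH as (l & Hn & Hl). destruct (classic (S B')) as [HS|HS].
        + exists (B' :: l). split.
          * constructor; auto. intros Hi. apply Hl in Hi. lia.
          * intros x; simpl. rewrite <- Hl. split.
            -- intros [Hx Hlt]. destruct (Nat.eq_dec x B'); [left; auto | right; split; auto; lia].
            -- intros [<-|[Hx Hlt]]; split; auto; lia.
        + exists l. split; auto. intros x. rewrite <- Hl. split.
          * intros [Hx Hlt]. split; auto. destruct (Nat.eq_dec x B'); subst; [contradiction | lia].
          * intros [Hx Hlt]; split; auto; lia. }
    destruct (HL B) as (l & Hn & Hl). exists (Fin (length l)). exists l. repeat split; auto.
    all: try (rewrite <- Hl; tauto). intros Hx. apply Hl. split; auto.
    destruct (Nat.lt_ge_cases x B); auto. exfalso; apply (HB x); auto.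
  - exists Inf. intros n. apply NNPP. intros Hn. apply H. exists n. intros m Hm HS. apply Hn. eauto.
Qed.

Lemma size_unique S s s' : hasSize S s -> hasSize S s' -> s = s'.
Proof.
  destruct s as [k|], s' as [k'|]; simpl.
  - intros (l & Hn & <- & Hl) (l' & Hn' & <- & Hl'). f_equal.
    apply Nat.le_antisymm; apply NoDup_incl_length; auto; intros x Hx;
      [apply Hl', Hl | apply Hl, Hl']; auto.
  - intros (l & Hn & <- & Hl) H. destruct (H (lmax l + 1)) as (m & Hm & HS).
    apply Hl, lmax_ge in HS. lia.
  - intros H (l & Hn & <- & Hl). destruct (H (lmax l + 1)) as (m & Hm & HS).
    apply Hl, lmax_ge in HS. lia.
  - auto.
Qed.

Lemma size_zero S : hasSize S (Fin 0) <-> forall x, ~ S x.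
Proof.
  simpl. split.
  - intros (l & _ & Hlen & Hl) x Hx. destruct l; simpl in *; try lia. apply Hl in Hx; auto.
  - intros H. exists []. repeat split; auto. constructor. intros Hx; exfalso; eapply H; eauto.
    simpl; tauto.
Qed.

Lemma size_union S T s t : (forall x, S x -> T x -> False) -> hasSize S s -> hasSize T t ->
  hasSize (fun x => S x \/ T x) (eadd s t).
Proof.
  intros Hd. destruct s as [k|], t as [k'|]; simpl.
  - intros (l & Hn & <- & Hl) (l' & Hn' & <- & Hl'). exists (l ++ l'). repeat split.
    + apply NoDup_app; auto. intros a Ha Ha'. apply (Hd a); [apply Hl | apply Hl']; auto.
    + apply length_app.
    + intros [H|H]; apply in_or_app; [left; apply Hl | right; apply Hl']; auto.
    + intros H. apply in_app_or in H as [H|H]; [left; apply Hl | right; apply Hl']; auto.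
  - intros _ H n. destruct (H n) as (m & ? & ?); eauto.
  - intros H _ n. destruct (H n) as (m & ? & ?); eauto.
  - intros H _ n. destruct (H n) as (m & ? & ?); eauto.
Qed.

Lemma pick_list S : hasSize S Inf -> forall k, exists l, NoDup l /\ length l = k /\ forall x, In x l -> S x.
Proof.
  intros H k. induction k as [|k (l & Hn & Hlen & Hl)].
  - exists []. repeat split; auto. constructor. intros x [].
  - destruct (H (lmax l + 1)) as (m & Hm & HS). exists (m :: l). repeat split.
    + constructor; auto. intros Hi. apply lmax_ge in Hi. lia.
    + simpl; lia.
    + intros x [<-|Hx]; auto.
Qed.

Lemma enum_inf S : hasSize S Inf -> exists e : nat -> nat, (forall k, S (e k)) /\ (forall k, e k < e (Datatypes.S k)) .
Proof.
  intros H. destruct (functional_choice _ H) as [g Hg].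
  exists (fix e k := match k with 0 => g 0 | Datatypes.S k => g (Datatypes.S (e k)) end).
  split.
  - intros [|k]; apply Hg.
  - intros k. simpl. destruct (Hg (Datatypes.S ((fix e (k0 : nat) : nat := match k0 with
                                               | 0 => g 0
                                               | Datatypes.S k1 => g (Datatypes.S (e k1))
                                               end) k))). lia.
Qed.

Lemma mono_strict (e : nat -> nat) : (forall k, e k < e (S k)) -> forall a b, a < b -> e a < e b.
Proof.
  intros H a b Hab. induction Hab; auto. specialize (H m). lia.
Qed.

Lemma nodup_disj (l1 l2 : list nat) x : NoDup (l1 ++ l2) -> In x l1 -> In x l2 -> False.
Proof.
  induction l1; simpl; intros Hn H1 H2; auto. inversion Hn; subst. destruct H1 as [->|H1].
  - apply H3. apply in_or_app; auto.
  - eauto.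
Qed.

Lemma split_prop S s1 s2 : hasSize S (eadd s1 s2) ->
  exists T : nat -> Prop, hasSize (fun x => S x /\ T x) s1 /\ hasSize (fun x => S x /\ ~ T x) s2.
Proof.
  destruct s1 as [k1|], s2 as [k2|]; simpl.
  - intros (l & Hn & Hlen & Hl).
    rewrite <- (firstn_skipn k1 l) in Hn.
    pose proof (NoDup_app_remove_r _ _ Hn) as Hn1. pose proof (NoDup_app_remove_l _ _ Hn) as Hn2.
    exists (fun x => In x (firstn k1 l)). split.
    + exists (firstn k1 l). split; [exact Hn1|split; [rewrite length_firstn; lia|]].
      intros x; split; [tauto|]. intros Hx; split; auto. apply Hl.
      rewrite <- (firstn_skipn k1 l). apply in_or_app; auto.
    + exists (skipn k1 l). split; [exact Hn2|split; [rewrite length_skipn; lia|]].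
      intros x; split.
      * intros [Hx Hx']. apply Hl in Hx. rewrite <- (firstn_skipn k1 l) in Hx.
        apply in_app_or in Hx as [?|?]; tauto.
      * intros Hx. split.
        -- apply Hl. rewrite <- (firstn_skipn k1 l); apply in_or_app; auto.
        -- intros Hx'. exact (nodup_disj _ _ _ Hn Hx' Hx).
  - intros H. destruct (pick_list S H k1) as (l & Hn & Hlen & Hl).
    exists (fun x => In x l). split.
    + exists l. split; [exact Hn|split; [exact Hlen|]]. intros x; split; [tauto|]. intros; split; auto.
    + intros n. destruct (H (Nat.max n (lmax l + 1))) as (m & Hm & HS). exists m. split; [lia|].
      split; auto. intros Hi. apply lmax_ge in Hi. lia.
  - intros H. destruct (pick_list S H k2) as (l & Hn & Hlen & Hl).
    exists (fun x => ~ In x l). split.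
    + intros n. destruct (H (Nat.max n (lmax l + 1))) as (m & Hm & HS). exists m. split; [lia|].
      split; auto. intros Hi. apply lmax_ge in Hi. lia.
    + exists l. split; [exact Hn|split; [exact Hlen|]]. intros x; split.
      * intros [_ Hx]. apply NNPP; auto.
      * intros Hx. split; auto.
  - intros H. destruct (enum_inf S H) as (e & He & Hm).
    pose proof (mono_strict e Hm) as Hs.
    assert (Hge : forall k, k <= e k).
    { induction k; [lia|]. specialize (Hm k). lia. }
    assert (Hinj : forall a b, e a = e b -> a = b).
    { intros a b Hab. destruct (Nat.lt_trichotomy a b) as [h|[h|h]]; auto;
      apply Hs in h; lia. }
    exists (fun x => exists k, x = e (2 * k)). split.
    + intros n. exists (e (2 * n)). split; [specialize (Hge (2*n)); lia|]. split; eauto.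
    + intros n. exists (e (2 * n + 1)). split; [specialize (Hge (2*n+1)); lia|]. split; auto.
      intros [k Hk]. apply Hinj in Hk. lia.
Qed.

Lemma split_bool S s1 s2 : hasSize S (eadd s1 s2) ->
  exists G : nat -> bool, hasSize (fun x => S x /\ G x = true) s1 /\ hasSize (fun x => S x /\ G x = false) s2.
Proof.
  intros H. destruct (split_prop S s1 s2 H) as (T & H1 & H2).
  exists (fun x => if excluded_middle_informative (T x) then true else false). split.
  - revert H1. apply size_ext. intros x. destruct (excluded_middle_informative (T x)); intuition congruence.
  - revert H2. apply size_ext. intros x. destruct (excluded_middle_informative (T x)); intuition congruence.
Qed.

Definition SA1 : SetAlg := {| pts := nat; good := fun _ => True;
  good_and := fun _ _ _ _ => I; good_neg := fun _ _ => I |}.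

Definition depth (N : nat) (f : nat + (nat -> bool) -> bool) : Prop :=
  forall w w', (forall j, j < N -> w j = w' j) -> f (inr w) = f (inr w').

Lemma depth_mono N N' f : N <= N' -> depth N f -> depth N' f.
Proof. intros H D w w' Hw. apply D. intros j Hj. apply Hw. lia. Qed.

Lemma good2_and f g : (exists N, depth N f) -> (exists N, depth N g) ->
  exists N, depth N (fun p => f p && g p).
Proof.
  intros [N1 H1] [N2 H2]. exists (Nat.max N1 N2). intros w w' Hw.
  rewrite (depth_mono N1 (Nat.max N1 N2) f ltac:(lia) H1 w w' Hw),
          (depth_mono N2 (Nat.max N1 N2) g ltac:(lia) H2 w w' Hw). reflexivity.
Qed.

Lemma good2_neg f : (exists N, depth N f) -> exists N, depth N (fun p => negb (f p)).
Proof. intros [N H]. exists N. intros w w' Hw. rewrite (H w w' Hw). reflexivity. Qed.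

Definition SA2 : SetAlg := {| pts := nat + (nat -> bool); good := fun f => exists N, depth N f;
  good_and := good2_and; good_neg := good2_neg |}.

Definition A1 := mkAlg SA1.
Definition A2 := mkAlg SA2.

Definition top1 : car SA1 := exist _ (fun _ => true) I.
Lemma depth_const N b : depth N (fun _ => b). Proof. intros ? ? ?; reflexivity. Qed.
Definition top2 : car SA2 := exist (fun f => exists N, depth N f) (fun _ => true) (ex_intro _ 0 (depth_const 0 true)).

Definition C1 (v : nat -> car SA1) (e : nat -> bool) (p : nat) := forall i, proj1_sig (v i) p = e i.
Definition C2 (w : nat -> car SA2) (e : nat -> bool) (k : nat) := forall i, proj1_sig (w i) (inl k) = e i.
Definition RR (w : nat -> car SA2) (e : nat -> bool) := exists om, forall i, proj1_sig (w i) (inr om) = e i.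
Definition Dep (w : nat -> car SA2) N := forall i, depth N (proj1_sig (w i)).
Definition Rel (Q : ext -> ext -> Prop -> Prop) v w :=
  (exists N, Dep w N) /\ forall e, exists s a, hasSize (C1 v e) s /\ hasSize (C2 w e) a /\ Q s a (RR w e).

Definition setb (e : nat -> bool) n b := fun i => if Nat.eqb i n then b else e i.

Lemma pat_merge (f e : nat -> bool) n :
  (forall i, (if Nat.eqb i n then true else f i) = e i) <->
  (e n = true /\ ((forall i, f i = e i) \/ (forall i, f i = setb e n false i))).
Proof.
  unfold setb. split.
  - intros H. pose proof (H n) as Hn. rewrite Nat.eqb_refl in Hn. split; auto.
    destruct (f n) eqn:Ef; [left|right]; intros i; specialize (H i);
      destruct (Nat.eqb_spec i n); subst; congruence.
  - intros [Hn [H|H]] i; specialize (H i); destruct (Nat.eqb_spec i n); subst; congruence.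
Qed.

Lemma pat_split (f e : nat -> bool) n b : f n = true ->
  ((forall i, (if Nat.eqb i n then b else f i) = e i) <->
   (b = e n /\ forall i, f i = setb e n true i)).
Proof.
  unfold setb. intros Hf. split.
  - intros H. pose proof (H n) as Hn. rewrite Nat.eqb_refl in Hn. split; auto.
    intros i; specialize (H i); destruct (Nat.eqb_spec i n); subst; congruence.
  - intros [Hb H] i; specialize (H i); destruct (Nat.eqb_spec i n); subst; congruence.
Qed.

Lemma upd_val {S : SetAlg} (v : nat -> car S) n x i p :
  proj1_sig (upd v n x i) p = if Nat.eqb i n then proj1_sig x p else proj1_sig (v i) p.
Proof. unfold upd. destruct (Nat.eqb i n); reflexivity. Qed.

Lemma upd_upd {X : Type} (v : nat -> X) n x y : upd (upd v n x) n y = upd v n y.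
Proof. apply functional_extensionality; intro i; unfold upd; destruct (Nat.eqb i n); auto. Qed.

Lemma upd_same {X : Type} (v : nat -> X) n x : upd v n x n = x.
Proof. unfold upd. rewrite Nat.eqb_refl. auto. Qed.

Lemma C1_upd_top v n e p : C1 (upd v n top1) e p <-> e n = true /\ (C1 v e p \/ C1 v (setb e n false) p).
Proof.
  unfold C1. assert (Hu : forall i, proj1_sig (upd v n top1 i) p = if Nat.eqb i n then true else proj1_sig (v i) p)
    by (intros; rewrite upd_val; reflexivity).
  setoid_rewrite Hu. apply pat_merge.
Qed.

Lemma C2_upd_top w n e k : C2 (upd w n top2) e k <-> e n = true /\ (C2 w e k \/ C2 w (setb e n false) k).
Proof.
  unfold C2. assert (Hu : forall i, proj1_sig (upd w n top2 i) (inl k) = if Nat.eqb i n then true else proj1_sig (w i) (inl k))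
    by (intros; rewrite upd_val; reflexivity).
  setoid_rewrite Hu. apply pat_merge.
Qed.

Lemma RR_upd_top w n e : RR (upd w n top2) e <-> e n = true /\ (RR w e \/ RR w (setb e n false)).
Proof.
  unfold RR. assert (Hu : forall om i, proj1_sig (upd w n top2 i) (inr om) = if Nat.eqb i n then true else proj1_sig (w i) (inr om))
    by (intros; rewrite upd_val; reflexivity).
  setoid_rewrite Hu. setoid_rewrite pat_merge. firstorder.
Qed.

Lemma setb_n e n b : setb e n b n = b.
Proof. unfold setb. rewrite Nat.eqb_refl. auto. Qed.

Lemma Rel_merge Q (Q0 : Q (Fin 0) (Fin 0) False)
  (Qadd : forall s1 a1 (r1 : Prop) s2 a2 (r2 : Prop), Q s1 a1 r1 -> Q s2 a2 r2 -> Q (eadd s1 s2) (eadd a1 a2) (r1 \/ r2))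
  v w n : Rel Q v w -> Rel Q (upd v n top1) (upd w n top2).
Proof.
  intros [[N HN] H]. split.
  - exists N. intros i. unfold upd; destruct (Nat.eqb i n); [intros ? ? ?; reflexivity | apply HN].
  - intros e. destruct (e n) eqn:En.
    + destruct (H e) as (s1 & a1 & Hs1 & Ha1 & Q1).
      destruct (H (setb e n false)) as (s2 & a2 & Hs2 & Ha2 & Q2).
      exists (eadd s1 s2), (eadd a1 a2). split; [|split].
      * eapply size_ext; [|apply size_union; [|exact Hs1|exact Hs2]].
        -- intros p. rewrite C1_upd_top. tauto.
        -- intros p H1 H2. specialize (H1 n). specialize (H2 n). rewrite setb_n in H2. congruence.
      * eapply size_ext; [|apply size_union; [|exact Ha1|exact Ha2]].
        -- intros p. rewrite C2_upd_top. tauto.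
        -- intros p H1 H2. specialize (H1 n). specialize (H2 n). rewrite setb_n in H2. congruence.
      * replace (RR (upd w n top2) e) with (RR w e \/ RR w (setb e n false)); auto.
        apply propositional_extensionality. rewrite RR_upd_top. tauto.
    + exists (Fin 0), (Fin 0). split; [|split].
      * apply size_zero. intros p Hp. apply C1_upd_top in Hp. destruct Hp; congruence.
      * apply size_zero. intros p Hp. apply C2_upd_top in Hp. destruct Hp; congruence.
      * replace (RR (upd w n top2) e) with False; auto.
        apply propositional_extensionality. rewrite RR_upd_top. split; [tauto|]. intros [? _]; congruence.
Qed.

Lemma C1_upd_split v n z e p : (forall p, proj1_sig (v n) p = true) ->
  (C1 (upd v n z) e p <-> proj1_sig z p = e n /\ C1 v (setb e n true) p).
Proof.
  intros Hv. unfold C1.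
  assert (Hu : forall i, proj1_sig (upd v n z i) p = if Nat.eqb i n then proj1_sig z p else proj1_sig (v i) p)
    by (intros; apply upd_val).
  setoid_rewrite Hu. apply (pat_split (fun i => proj1_sig (v i) p)). apply Hv.
Qed.

Lemma C2_upd_split w n z e k : (forall q, proj1_sig (w n) q = true) ->
  (C2 (upd w n z) e k <-> proj1_sig z (inl k) = e n /\ C2 w (setb e n true) k).
Proof.
  intros Hw. unfold C2.
  assert (Hu : forall i, proj1_sig (upd w n z i) (inl k) = if Nat.eqb i n then proj1_sig z (inl k) else proj1_sig (w i) (inl k))
    by (intros; apply upd_val).
  setoid_rewrite Hu. apply (pat_split (fun i => proj1_sig (w i) (inl k))). apply Hw.
Qed.

Lemma RR_upd_split w n z e : (forall q, proj1_sig (w n) q = true) ->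
  (RR (upd w n z) e <-> exists om, proj1_sig z (inr om) = e n /\ forall i, proj1_sig (w i) (inr om) = setb e n true i).
Proof.
  intros Hw. unfold RR.
  assert (Hu : forall om i, proj1_sig (upd w n z i) (inr om) = if Nat.eqb i n then proj1_sig z (inr om) else proj1_sig (w i) (inr om))
    by (intros; apply upd_val).
  setoid_rewrite Hu. split; intros [om Hom]; exists om;
    [apply (pat_split (fun i => proj1_sig (w i) (inr om))) | apply (pat_split (fun i => proj1_sig (w i) (inr om)))]; auto.
Qed.

Inductive code := cnone | call | chalf.
Definition codeOK (c : code) (b : bool) : Prop :=
  match c with cnone => b = false | call => b = true | chalf => True end.
Definition codeval (c : code) (N : nat) (om : nat -> bool) : bool :=
  match c with cnone => false | call => true | chalf => om N end.

Lemma pat_eq_of (f e : nat -> bool) : (forall i, f i = e i) -> f = e.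
Proof. intros; apply functional_extensionality; auto. Qed.

Lemma move12 (Q Q' : ext -> ext -> Prop -> Prop)
  (cell : forall (S1 S2 : nat -> Prop) (r : Prop) s a (z : nat -> bool),
      hasSize S1 s -> hasSize S2 a -> Q s a r ->
      exists (G : nat -> bool) (cd : code), forall b, exists s' a',
        hasSize (fun p => S1 p /\ z p = b) s' /\ hasSize (fun k => S2 k /\ G k = b) a' /\
        Q' s' a' (r /\ codeOK cd b))
  v w n z : Rel Q v w -> (forall p, proj1_sig (v n) p = true) -> (forall q, proj1_sig (w n) q = true) ->
  exists z', Rel Q' (upd v n z) (upd w n z').
Proof.
  intros [[N HN] H] Hv Hw.
  assert (Hc : forall e0, exists Gc : (nat -> bool) * code, forall b, exists s' a',
        hasSize (fun p => C1 v e0 p /\ proj1_sig z p = b) s' /\ hasSize (fun k => C2 w e0 k /\ fst Gc k = b) a' /\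
        Q' s' a' (RR w e0 /\ codeOK (snd Gc) b)).
  { intros e0. destruct (H e0) as (s & a & Hs & Ha & Hq).
    destruct (cell _ _ _ _ _ (proj1_sig z) Hs Ha Hq) as (G & cd & HG). exists (G, cd). exact HG. }
  destruct (functional_choice _ Hc) as [f Hf].
  set (zf := fun q : nat + (nat -> bool) => match q with
             | inl k => fst (f (fun i => proj1_sig (w i) (inl k))) k
             | inr om => codeval (snd (f (fun i => proj1_sig (w i) (inr om)))) N om end).
  assert (Hzd : depth (S N) zf).
  { intros om om' Hom.
    assert (Hp : (fun i => proj1_sig (w i) (inr om')) = (fun i => proj1_sig (w i) (inr om))).
    { apply functional_extensionality. intros i. symmetry. apply HN. intros j Hj. apply Hom. lia. }
    unfold zf. rewrite Hp.
    destruct (snd (f (fun i => proj1_sig (w i) (inr om)))); simpl; auto; apply Hom; lia. }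
  set (z' := exist (fun f => exists N, depth N f) zf (ex_intro _ (S N) Hzd) : car SA2).
  assert (Ezl : forall k e0, C2 w e0 k -> proj1_sig z' (inl k) = fst (f e0) k).
  { intros k e0 Hk. simpl. unfold zf. do 3 f_equal. apply functional_extensionality. exact Hk. }
  assert (Ezr : forall om e0, (forall i, proj1_sig (w i) (inr om) = e0 i) -> proj1_sig z' (inr om) = codeval (snd (f e0)) N om).
  { intros om e0 Hk. simpl. unfold zf. do 3 f_equal. apply functional_extensionality. exact Hk. }
  exists z'. split.
  - exists (S N). intros i. unfold upd. destruct (Nat.eqb i n); [exact Hzd|].
    apply (depth_mono N); [lia | apply HN].
  - intros e. destruct (Hf (setb e n true) (e n)) as (s' & a' & Hs & Ha & Hq).
    exists s', a'. split; [|split].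
    + revert Hs. apply size_ext. intros p. rewrite C1_upd_split by auto. tauto.
    + revert Ha. apply size_ext. intros k. rewrite C2_upd_split by auto.
      split; intros [H1 H2]; split; auto.
      * rewrite (Ezl k _ H1); auto.
      * rewrite <- (Ezl k _ H2); auto.
    + replace (RR (upd w n _) e) with (RR w (setb e n true) /\ codeOK (snd (f (setb e n true))) (e n)); auto.
      apply propositional_extensionality. rewrite RR_upd_split by auto.
      split.
      * intros [[om Hom] Hok]. destruct (snd (f (setb e n true))) eqn:Ec; simpl in Hok.
        -- exists om. rewrite (Ezr om _ Hom), Ec. simpl. auto.
        -- exists om. rewrite (Ezr om _ Hom), Ec. simpl. auto.
        -- set (om' := fun j => if Nat.eqb j N then e n else om j).
           assert (Hom' : forall i, proj1_sig (w i) (inr om') = setb e n true i).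
           { intros i. rewrite <- Hom. apply HN. intros j Hj. unfold om'.
             destruct (Nat.eqb_spec j N); [lia|auto]. }
           exists om'. rewrite (Ezr om' _ Hom'), Ec. simpl. split; auto.
           unfold om'. rewrite Nat.eqb_refl. auto.
      * intros [om [Hz Hom]]. rewrite (Ezr om _ Hom) in Hz. split; [exists om; auto|].
        destruct (snd (f (setb e n true))); simpl in *; auto.
Qed.

Lemma move21 (Q Q' : ext -> ext -> Prop -> Prop)
  (cell : forall (S1 S2 : nat -> Prop) (r rt rf : Prop) s a (G' : nat -> bool),
      hasSize S1 s -> hasSize S2 a -> Q s a r -> (r <-> rt \/ rf) ->
      exists G : nat -> bool, forall b : bool, exists s' a',
        hasSize (fun p => S1 p /\ G p = b) s' /\ hasSize (fun k => S2 k /\ G' k = b) a' /\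
        Q' s' a' (if b then rt else rf))
  v w n y' : Rel Q v w -> (forall p, proj1_sig (v n) p = true) -> (forall q, proj1_sig (w n) q = true) ->
  exists y, Rel Q' (upd v n y) (upd w n y').
Proof.
  intros [[N HN] H] Hv Hw.
  set (rt := fun e0 b => exists om, (forall i, proj1_sig (w i) (inr om) = e0 i) /\ proj1_sig y' (inr om) = b).
  assert (Hc : forall e0, exists G : nat -> bool, forall b : bool, exists s' a',
        hasSize (fun p => C1 v e0 p /\ G p = b) s' /\
        hasSize (fun k => C2 w e0 k /\ proj1_sig y' (inl k) = b) a' /\
        Q' s' a' (if b then rt e0 true else rt e0 false)).
  { intros e0. destruct (H e0) as (s & a & Hs & Ha & Hq).
    destruct (cell _ _ (RR w e0) (rt e0 true) (rt e0 false) _ _ (fun k => proj1_sig y' (inl k)) Hs Ha Hq)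
      as (G & HG).
    - unfold RR, rt. split.
      + intros [om Hom]. destruct (proj1_sig y' (inr om)) eqn:E; [left|right]; exists om; auto.
      + intros [[om [Hom _]]|[om [Hom _]]]; exists om; auto.
    - exists G. exact HG. }
  destruct (functional_choice _ Hc) as [f Hf].
  set (y := exist (fun _ => True) (fun p => f (fun i => proj1_sig (v i) p) p) I : car SA1).
  assert (Ey : forall p e0, C1 v e0 p -> proj1_sig y p = f e0 p).
  { intros p e0 Hp. simpl. f_equal. apply functional_extensionality. exact Hp. }
  destruct (proj2_sig y') as [d Hd].
  exists y. split.
  - exists (Nat.max N d). intros i. unfold upd. destruct (Nat.eqb i n).
    + apply (depth_mono d); [lia | exact Hd].
    + apply (depth_mono N); [lia | apply HN].
  - intros e. destruct (Hf (setb e n true) (e n)) as (s' & a' & Hs & Ha & Hq).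
    exists s', a'. split; [|split].
    + revert Hs. apply size_ext. intros p. rewrite C1_upd_split by auto.
      split; intros [H1 H2]; split; auto.
      * rewrite (Ey p _ H1); auto.
      * rewrite <- (Ey p _ H2); auto.
    + revert Ha. apply size_ext. intros k. rewrite C2_upd_split by auto. tauto.
    + replace (RR (upd w n y') e) with (if e n then rt (setb e n true) true else rt (setb e n true) false); auto.
      apply propositional_extensionality. rewrite RR_upd_split by auto. unfold rt.
      destruct (e n); split; intros [om [H1 H2]]; exists om; auto.
Qed.

Definition QX (s a : ext) (r : Prop) := s = a /\ (r -> a = Inf).
Definition QA (s a : ext) (r : Prop) := (r -> s = Inf) /\ (~ r -> s = a).
Definition QE (s a : ext) (r : Prop) := (s = Fin 0 <-> (a = Fin 0 /\ ~ r)) /\ (r \/ ele s a).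

Lemma pieces S1 s (z : nat -> bool) : hasSize S1 s ->
  exists st sf, hasSize (fun p => S1 p /\ z p = true) st /\ hasSize (fun p => S1 p /\ z p = false) sf /\ s = eadd st sf.
Proof.
  intros Hs. destruct (size_total (fun p => S1 p /\ z p = true)) as [st Ht].
  destruct (size_total (fun p => S1 p /\ z p = false)) as [sf Hf].
  exists st, sf. split; [auto|split; [auto|]].
  eapply size_unique; [exact Hs|]. eapply size_ext; [|apply size_union; [|exact Ht|exact Hf]].
  - intros p. cbv beta. destruct (z p); (split; [intros [[? _]|[? _]]; auto | intros; (left; split; auto; fail) || (right; split; auto)]).
  - intros p [_ H1] [_ H2]; congruence.
Qed.

Lemma eadd_Inf_l x : eadd Inf x = Inf. Proof. reflexivity. Qed.
Lemma eadd_Inf_r x : eadd x Inf = Inf. Proof. destruct x; reflexivity. Qed.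
Lemma eadd_zero x y : eadd x y = Fin 0 <-> x = Fin 0 /\ y = Fin 0.
Proof.
  destruct x as [x|], y as [y|]; simpl; split; intros H; try discriminate; try (destruct H; discriminate).
  - inversion H. split; f_equal; lia.
  - destruct H as [H1 H2]; inversion H1; inversion H2; reflexivity.
Qed.

Lemma cellX (S1 S2 : nat -> Prop) (r : Prop) s a (z : nat -> bool) :
  hasSize S1 s -> hasSize S2 a -> QX s a r ->
  exists (G : nat -> bool) (cd : code), forall b, exists s' a',
    hasSize (fun p => S1 p /\ z p = b) s' /\ hasSize (fun k => S2 k /\ G k = b) a' /\
    QX s' a' (r /\ codeOK cd b).
Proof.
  intros Hs Ha [<- Hr]. destruct (pieces S1 s z Hs) as (st & sf & Ht & Hf & ->).
  destruct (split_bool S2 st sf Ha) as (G & HG1 & HG2).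
  exists G, (match st with Inf => call | Fin _ => cnone end). intros b. destruct b.
  - exists st, st. split; [auto|split; [auto|]]. split; auto.
    destruct st; simpl; auto. intros [_ H]; discriminate.
  - exists sf, sf. split; [auto|split; [auto|]]. split; auto.
    destruct st; simpl.
    + intros [H1 _]. specialize (Hr H1). destruct sf; simpl in *; auto; discriminate.
    + intros [_ H]; discriminate.
Qed.

Definition code_dec (st sf : ext) : code :=
  match st with Fin 0 => cnone | _ => match sf with Fin 0 => call | _ => chalf end end.

Lemma ele_refl x : ele x x. Proof. destruct x; simpl; auto. Qed.
Lemma ele_0 x : ele (Fin 0) x. Proof. destruct x; simpl; auto; lia. Qed.
Lemma ele_add_l x y a : ele (eadd x y) a -> ele x a.
Proof. destruct x, y, a; simpl; auto; lia. Qed.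
Lemma eadd_esub x a : ele x a -> eadd x (esub a x) = a.
Proof. destruct x, a; simpl; auto; intros; try f_equal; try lia; contradiction. Qed.
Lemma ele_esub x y a : ele (eadd x y) a -> ele y (esub a x).
Proof. destruct x, y, a; simpl; auto; lia. Qed.
Lemma ele_nz x y : ele x y -> x <> Fin 0 -> y <> Fin 0.
Proof. destruct x, y; simpl; auto; intros H1 H2 H3; inversion H3; subst; apply H2; f_equal; lia. Qed.

Lemma cellE (S1 S2 : nat -> Prop) (r : Prop) s a (z : nat -> bool) :
  hasSize S1 s -> hasSize S2 a -> QE s a r ->
  exists (G : nat -> bool) (cd : code), forall b, exists s' a',
    hasSize (fun p => S1 p /\ z p = b) s' /\ hasSize (fun k => S2 k /\ G k = b) a' /\
    QE s' a' (r /\ codeOK cd b).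
Proof.
  intros Hs Ha [Hz Hle]. destruct (pieces S1 s z Hs) as (st & sf & Ht & Hf & ->).
  destruct (classic r) as [Hr|Hr].
  - assert (Hsnz : eadd st sf <> Fin 0) by (intros E; apply Hz in E; tauto).
    destruct (classic (st = Fin 0)) as [H0|H0].
    + exists (fun _ => false), cnone. intros [|].
      * exists st, (Fin 0). split; [auto|split; [apply size_zero; intros k [_ E]; discriminate|]].
        split; [split; intros; subst; simpl in *; try tauto; split; auto; intros [_ E]; discriminate|].
        right. subst. apply ele_0.
      * exists sf, a. split; [auto|split; [eapply size_ext; [|exact Ha]; intros k; tauto|]].
        subst st. assert (E0 : eadd (Fin 0) sf = sf) by (destruct sf; reflexivity). rewrite E0 in Hsnz.
        split; [|left; simpl; tauto]. split; intros H; [exfalso; apply Hsnz; exact H|]. destruct H as [_ H]. simpl in H. tauto.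
    + exists (fun _ => true), (code_dec st sf). intros [|].
      * exists st, a. split; [auto|split; [eapply size_ext; [|exact Ha]; intros k; tauto|]].
        assert (Hok : codeOK (code_dec st sf) true).
        { unfold code_dec. destruct st as [[|]|]; [congruence| |]; destruct sf as [[|]|]; simpl; auto. }
        split; [split; intros H; [contradiction | destruct H as [_ H]; tauto]|left; tauto].
      * destruct (classic (sf = Fin 0)) as [H1|H1].
        -- exists sf, (Fin 0). split; [auto|split; [apply size_zero; intros k [_ E]; discriminate|]].
           assert (Hok : ~ codeOK (code_dec st sf) false).
           { unfold code_dec. subst sf. destruct st as [[|]|]; simpl; try congruence; discriminate. }
           split; [split; intros; auto; tauto|]. right; subst; apply ele_refl.
        -- exists sf, (Fin 0). split; [auto|split; [apply size_zero; intros k [_ E]; discriminate|]].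
           assert (Hok : codeOK (code_dec st sf) false).
           { unfold code_dec. destruct st as [[|]|]; [congruence| |]; destruct sf as [[|]|]; simpl; auto; congruence. }
           split; [split; intros H; [contradiction | destruct H as [_ H]; tauto]|left; tauto].
  - destruct Hle as [Hle|Hle]; [contradiction|].
    destruct (classic (sf = Fin 0)) as [H1|H1].
    + assert (Ha' : hasSize S2 (eadd a (Fin 0))) by (destruct a; simpl; [rewrite Nat.add_0_r|]; auto).
      destruct (split_bool S2 a (Fin 0) Ha') as (G & HG1 & HG2).
      exists G, cnone. intros [|].
      * exists st, a. split; [auto|split; [auto|]].
        subst sf. replace (eadd st (Fin 0)) with st in * by (destruct st; simpl; auto; f_equal; lia).
        split; [|right; auto]. rewrite Hz. tauto.
      * exists sf, (Fin 0). split; [auto|split; [auto|]]. subst sf.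
        split; [tauto|right; apply ele_0].
    + assert (Hst : ele st a) by (eapply ele_add_l; eauto).
      assert (Ha' : hasSize S2 (eadd st (esub a st))) by (rewrite eadd_esub; auto).
      destruct (split_bool S2 st (esub a st) Ha') as (G & HG1 & HG2).
      exists G, cnone. intros [|].
      * exists st, st. split; [auto|split; [auto|]]. split; [tauto|right; apply ele_refl].
      * exists sf, (esub a st). split; [auto|split; [auto|]].
        assert (Hl : ele sf (esub a st)) by (apply ele_esub; auto).
        split; [|right; auto]. split; intros H; [contradiction|].
        destruct H as [H _]. exfalso. exact (ele_nz _ _ Hl H1 H).
Qed.

Lemma cellA (S1 S2 : nat -> Prop) (r rt rf : Prop) s a (G' : nat -> bool) :
  hasSize S1 s -> hasSize S2 a -> QA s a r -> (r <-> rt \/ rf) ->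
  exists G : nat -> bool, forall b : bool, exists s' a',
    hasSize (fun p => S1 p /\ G p = b) s' /\ hasSize (fun k => S2 k /\ G' k = b) a' /\
    QA s' a' (if b then rt else rf).
Proof.
  intros Hs Ha [Q1 Q2] Hr.
  destruct (pieces S2 a G' Ha) as (at_ & af & Ht & Hf & ->).
  assert (Hsel : forall (q : Prop) x, exists y, (q -> y = Inf) /\ (~ q -> y = x)).
  { intros q x. destruct (classic q); [exists Inf | exists x]; tauto. }
  destruct (Hsel rt at_) as (st & Hst1 & Hst2). destruct (Hsel rf af) as (sf & Hsf1 & Hsf2).
  assert (Hsum : s = eadd st sf).
  { destruct (classic r) as [H|H].
    - rewrite (Q1 H). apply Hr in H as [H|H]; [rewrite (Hst1 H)|rewrite (Hsf1 H), eadd_Inf_r]; reflexivity.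
    - rewrite (Q2 H). rewrite Hst2, Hsf2 by tauto. reflexivity. }
  subst s. destruct (split_bool S1 st sf Hs) as (G & HG1 & HG2).
  exists G. intros [|].
  - exists st, at_. split; [auto|split; [auto|split; auto]].
  - exists sf, af. split; [auto|split; [auto|split; auto]].
Qed.

Lemma QX0 : QX (Fin 0) (Fin 0) False. Proof. split; auto; intros []. Qed.
Lemma QA0 : QA (Fin 0) (Fin 0) False. Proof. split; auto; intros []. Qed.
Lemma QE0 : QE (Fin 0) (Fin 0) False. Proof. split; [tauto|right; apply ele_0]. Qed.

Lemma QXadd s1 a1 (r1 : Prop) s2 a2 (r2 : Prop) : QX s1 a1 r1 -> QX s2 a2 r2 -> QX (eadd s1 s2) (eadd a1 a2) (r1 \/ r2).
Proof.
  intros [-> H1] [-> H2]. split; auto. intros [H|H]; [rewrite (H1 H) | rewrite (H2 H), eadd_Inf_r]; reflexivity.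
Qed.
Lemma QAadd s1 a1 (r1 : Prop) s2 a2 (r2 : Prop) : QA s1 a1 r1 -> QA s2 a2 r2 -> QA (eadd s1 s2) (eadd a1 a2) (r1 \/ r2).
Proof.
  intros [H1 H1'] [H2 H2']. split.
  - intros [H|H]; [rewrite (H1 H) | rewrite (H2 H), eadd_Inf_r]; reflexivity.
  - intros H. rewrite H1', H2' by tauto. reflexivity.
Qed.
Lemma ele_add x1 y1 x2 y2 : ele x1 y1 -> ele x2 y2 -> ele (eadd x1 x2) (eadd y1 y2).
Proof. destruct x1, y1, x2, y2; simpl; auto; lia. Qed.
Lemma QEadd s1 a1 (r1 : Prop) s2 a2 (r2 : Prop) : QE s1 a1 r1 -> QE s2 a2 r2 -> QE (eadd s1 s2) (eadd a1 a2) (r1 \/ r2).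
Proof.
  intros [Z1 L1] [Z2 L2]. split.
  - rewrite !eadd_zero, Z1, Z2. tauto.
  - destruct L1 as [L1|L1]; [left; auto|]. destruct L2 as [L2|L2]; [left; auto|].
    right. apply ele_add; auto.
Qed.

Lemma Rel_mono (Q Q' : ext -> ext -> Prop -> Prop) (HQ : forall s a r, Q s a r -> Q' s a r) v w :
  Rel Q v w -> Rel Q' v w.
Proof.
  intros [HN H]. split; auto. intros e. destruct (H e) as (s & a & ? & ? & ?). exists s, a; auto.
Qed.

Lemma top_val1 v n x : proj1_sig (upd v n top1 n) x = true.
Proof. rewrite upd_same. reflexivity. Qed.
Lemma top_val2 (w : nat -> car SA2) n x : proj1_sig (upd w n top2 n) x = true.
Proof. rewrite upd_same. reflexivity. Qed.

Lemma moveX v w n x : Rel QX v w -> exists x', Rel QX (upd v n x) (upd w n x').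
Proof.
  intros H. apply (Rel_merge QX QX0 QXadd v w n) in H.
  destruct (move12 QX QX cellX _ _ n x H (top_val1 v n) (top_val2 w n)) as [x' Hx'].
  exists x'. rewrite !upd_upd in Hx'. exact Hx'.
Qed.

Lemma moveA v w n y' : Rel QA v w -> exists y, Rel QA (upd v n y) (upd w n y').
Proof.
  intros H. apply (Rel_merge QA QA0 QAadd v w n) in H.
  destruct (move21 QA QA cellA _ _ n y' H (top_val1 v n) (top_val2 w n)) as [y Hy].
  exists y. rewrite !upd_upd in Hy. exact Hy.
Qed.

Lemma moveE v w n x : Rel QE v w -> exists x', Rel QE (upd v n x) (upd w n x').
Proof.
  intros H. apply (Rel_merge QE QE0 QEadd v w n) in H.
  destruct (move12 QE QE cellE _ _ n x H (top_val1 v n) (top_val2 w n)) as [x' Hx'].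
  exists x'. rewrite !upd_upd in Hx'. exact Hx'.
Qed.

Lemma nonempty_size S s : hasSize S s -> ((exists x, S x) <-> s <> Fin 0).
Proof.
  intros H. split.
  - intros [x Hx] E. subst. exact (proj1 (size_zero S) H x Hx).
  - intros Hs. apply NNPP. intros Hn. apply Hs. eapply size_unique; [exact H|].
    apply size_zero. intros x Hx. apply Hn; eauto.
Qed.

Lemma QE_TE (v : nat -> car SA1) (w : nat -> car SA2) : Rel QE v w ->
  forall e, realized SA1 v e <-> realized SA2 w e.
Proof.
  intros [_ H] e. destruct (H e) as (s & a & Hs & Ha & [Hz _]).
  assert (R1 : realized SA1 v e <-> exists p, C1 v e p) by (unfold realized, C1; tauto).
  assert (R2 : realized SA2 w e <-> (exists k, C2 w e k) \/ RR w e).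
  { unfold realized, C2, RR. split.
    - intros [[k|om] Hq]; [left|right]; eauto.
    - intros [[k Hk]|[om Hom]]; eauto. }
  rewrite R1, R2, (nonempty_size _ _ Hs), (nonempty_size _ _ Ha). rewrite Hz.
  destruct (classic (a = Fin 0)); tauto.
Qed.

Lemma init_rel : Rel QX (fun _ => top1) (fun _ => top2).
Proof.
  split.
  - exists 0. intros i om om' _. reflexivity.
  - intros e. destruct (classic (forall i, e i = true)) as [H|H].
    + exists Inf, Inf. split; [|split].
      * intros n. exists n. split; auto. intros i. rewrite H. reflexivity.
      * intros n. exists n. split; auto. intros i. rewrite H. reflexivity.
      * split; auto.
    + assert (H' : exists i, e i = false).
      { apply NNPP. intros Hn. apply H. intros i. destruct (e i) eqn:E; auto. exfalso; eauto. }
      destruct H' as [i Hi].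
      exists (Fin 0), (Fin 0). split; [|split].
      * apply size_zero. intros p Hp. specialize (Hp i). simpl in Hp. congruence.
      * apply size_zero. intros p Hp. specialize (Hp i). simpl in Hp. congruence.
      * replace (RR (fun _ => top2) e) with False; [apply QX0|].
        apply propositional_extensionality. split; [tauto|]. intros [om Hom]. specialize (Hom i). simpl in Hom. congruence.
Qed.

Theorem transfer : forall phi, EAE_sentence phi -> holds A1 phi -> holds A2 phi.
Proof.
  apply (game A1 A2 (Rel QX) (Rel QA) (Rel QE)).
  - exact moveX.
  - apply Rel_mono. intros s a r [-> H]. split; auto.
  - exact moveA.
  - apply Rel_mono. intros s a r [H1 H2]. split.
    + destruct (classic r) as [Hr|Hr].
      * rewrite (H1 Hr). split; [discriminate|tauto].
      * rewrite (H2 Hr). tauto.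
    + destruct (classic r) as [Hr|Hr]; [left; auto|right; rewrite (H2 Hr); apply ele_refl].
  - exact moveE.
  - intros v w psi H Hq. apply (proj1 (qf_transfer A1 A2 v w (TE SA1 SA2 v w (QE_TE v w H)) psi Hq)).
  - exists (fun _ => top1), (fun _ => top2). exact init_rel.
Qed.

Lemma meet_pt (S : SetAlg) (a b : car S) p : proj1_sig (meet (mkAlg S) a b) p = proj1_sig a p && proj1_sig b p.
Proof. reflexivity. Qed.
Lemma ant_pt (S : SetAlg) (a : car S) p : proj1_sig (antidom (mkAlg S) a) p = negb (proj1_sig a p).
Proof. reflexivity. Qed.
Lemma le_pt (S : SetAlg) (a b : car S) p : le (mkAlg S) a b -> proj1_sig a p = true -> proj1_sig b p = true.
Proof.
  unfold le. intros H Ha. apply (f_equal (fun c : car S => proj1_sig c p)) in H.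
  rewrite meet_pt, Ha in H. exact H.
Qed.

Definition th1 (a : A1) (x y : nat) : Prop := x = y /\ proj1_sig a x = true.

Lemma rep1 : completely_representable A1.
Proof.
  exists nat, th1. split; [split; [|split; [|split; [|split; [|split]]]]|].
  - intros a x y z [-> _] [-> _]. reflexivity.
  - intros x. exists top1, x. left. split; reflexivity.
  - intros a b H. apply eq_car. apply functional_extensionality. intros p.
    specialize (H p p). unfold th1 in H.
    destruct (proj1_sig a p), (proj1_sig b p); auto; exfalso; intuition congruence.
  - intros a b x z. unfold th1. simpl. rewrite andb_true_iff. split.
    + intros [-> [H1 H2]]. exists z. auto.
    + intros [y [[-> H1] [-> H2]]]. auto.
  - intros a b x y. unfold th1. simpl. rewrite andb_true_iff. tauto.
  - intros a x y. unfold th1. simpl. rewrite negb_true_iff. split.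
    + intros [-> H]. split; auto. intros [z [-> Hz]]. congruence.
    + intros [-> H]. split; auto. destruct (proj1_sig a y) eqn:E; auto. exfalso. apply H. exists y. auto.
  - intros S m [s0 Hs0] [Hlb Hglb] x y. split.
    + intros [-> Hm] s Hs. split; auto. exact (le_pt SA1 m s y (Hlb s Hs) Hm).
    + intros H. destruct (H s0 Hs0) as [-> _]. split; auto.
      set (sing := exist (fun _ : nat -> bool => True) (fun p => Nat.eqb p y) I : A1).
      assert (Hs : le A1 sing m).
      { apply Hglb. intros s Hs. apply eq_car. apply functional_extensionality. intros p. rewrite meet_pt.
        simpl. destruct (Nat.eqb_spec p y); simpl; auto. subst. destruct (H s Hs) as [_ E]. exact E. }
      apply (le_pt SA1 sing m y Hs). simpl. apply Nat.eqb_refl.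
Qed.

Lemma not_rep2 : ~ completely_representable A2.
Proof.
  intros (X & th & [[Hpf [Hcov [Hinj [Hcomp [Hmeet Hant]]]]] Hc]).
  set (zero2 := antidom A2 top2).
  assert (Hz : forall x y, ~ th zero2 x y).
  { intros x y H. pose proof H as H'. apply Hant in H' as [_ H']. apply H'. exists y.
    assert (E : zero2 = meet A2 zero2 top2).
    { apply eq_car. apply functional_extensionality. intros p. simpl. destruct (negb true); auto. }
    rewrite E in H. apply Hmeet in H. tauto. }
  assert (Hinv : forall a : A2, antidom A2 (antidom A2 a) = a).
  { intros a. apply eq_car. apply functional_extensionality. intros p. simpl. apply negb_involutive. }
  assert (Hsub : forall a x y, th a x y -> x = y).
  { intros a x y H. rewrite <- (Hinv a) in H. apply Hant in H. tauto. }
  assert (Hdich : forall (b : A2) x, th b x x \/ th (antidom A2 b) x x).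
  { intros b x. destruct (classic (th (antidom A2 b) x x)) as [H|H]; auto. left.
    assert (Hz' : exists z, th b x z).
    { apply NNPP. intros Hn. apply H. apply Hant. auto. }
    destruct Hz' as [z Hz']. pose proof (Hsub _ _ _ Hz'). subst. auto. }
  set (cf := fun q : nat + (nat -> bool) => match q with inl _ => false | inr _ => true end).
  assert (Hcd : depth 0 cf) by (intros ? ? ?; reflexivity).
  set (c := exist (fun f => exists N, depth N f) cf (ex_intro _ 0 Hcd) : A2).
  assert (Hxy : exists x y, th c x y).
  { apply NNPP. intros Hn. assert (E : c = zero2).
    { apply Hinj. intros x y. split; intros H; [exfalso; apply Hn; eauto | exfalso; eapply Hz; eauto]. }
    apply (f_equal (fun a : A2 => proj1_sig a (inr (fun _ => true)))) in E. simpl in E. discriminate. }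
  destruct Hxy as (x & y & Hcxy). pose proof (Hsub _ _ _ Hcxy). subst y.
  set (Sx := fun b : A2 => th b x x).
  assert (Hglb : is_glb A2 Sx zero2).
  { split.
    - intros s _. apply eq_car. apply functional_extensionality. intros p. reflexivity.
    - intros l Hl.
      assert (Hl0 : forall q, proj1_sig l q = false).
      { intros q. destruct (proj1_sig l q) eqn:Eq; auto. exfalso.
        pose proof (Hl c Hcxy) as Hlc. unfold le in Hlc. apply (f_equal (fun a : A2 => proj1_sig a q)) in Hlc.
        rewrite meet_pt in Hlc.
        destruct q as [k|om]; [change (proj1_sig c (inl k)) with false in Hlc; rewrite Eq in Hlc; discriminate|].
        destruct (proj2_sig l) as [N HN].
        set (l1f := fun q : nat + (nat -> bool) => proj1_sig l q && match q with inl _ => false | inr om => om N end).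
        assert (Hl1d : depth (S N) l1f).
        { intros o o' Ho. unfold l1f. rewrite (HN o o') by (intros; apply Ho; lia). rewrite (Ho N) by lia. reflexivity. }
        set (l1 := exist (fun f => exists N, depth N f) l1f (ex_intro _ (S N) Hl1d) : A2).
        set (omt := fun j => if Nat.eqb j N then true else om j).
        set (omf := fun j => if Nat.eqb j N then false else om j).
        assert (Et : proj1_sig l (inr omt) = true).
        { rewrite <- Eq. apply HN. intros j Hj. unfold omt. destruct (Nat.eqb_spec j N); [lia|auto]. }
        assert (Ef : proj1_sig l (inr omf) = true).
        { rewrite <- Eq. apply HN. intros j Hj. unfold omf. destruct (Nat.eqb_spec j N); [lia|auto]. }
        destruct (Hdich l1 x) as [H1|H1].
        - pose proof (Hl l1 H1) as E. unfold le in E. apply (f_equal (fun a : A2 => proj1_sig a (inr omf))) in E.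
          rewrite meet_pt in E. change (proj1_sig l1 (inr omf)) with (l1f (inr omf)) in E. unfold l1f in E.
          rewrite Ef in E. unfold omf in E. rewrite Nat.eqb_refl in E. simpl in E. discriminate.
        - pose proof (Hl _ H1) as E. unfold le in E. apply (f_equal (fun a : A2 => proj1_sig a (inr omt))) in E.
          rewrite meet_pt, ant_pt in E. change (proj1_sig l1 (inr omt)) with (l1f (inr omt)) in E. unfold l1f in E.
          rewrite Et in E. unfold omt in E. rewrite Nat.eqb_refl in E. simpl in E. discriminate. }
      unfold le. apply eq_car. apply functional_extensionality. intros p. rewrite meet_pt, Hl0. reflexivity. }
  pose proof (proj2 (Hc Sx zero2 (ex_intro _ c Hcxy) Hglb x x) (fun s Hs => Hs)) as H0.
  exact (Hz _ _ H0).
Qed.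

Theorem mainTheorem8 :
  ~ exists Th : formula -> Prop,
      (forall phi, Th phi -> EAE_sentence phi) /\
      (forall M : algebra, inhabited M ->
         ((forall phi, Th phi -> holds M phi) <-> completely_representable M)).
Proof.
  intros (Th & HE & Hch).
  assert (H1 : forall phi, Th phi -> holds A1 phi) by (apply (Hch A1 (inhabits top1)); exact rep1).
  apply not_rep2. apply (Hch A2 (inhabits top2)). intros phi Hphi. apply transfer; auto.
Qed.
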